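(* If $\mathfrak{g}$ is either atom or loose guards, then for $k>0$ and $\sigma$-structures $\mathcal{A},\mathcal{B}$, there is a bijective correspondence between (1) coKleisli morphisms ($\sigma$-homomorphisms) $\mathbb{G}_{k}^{\mathfrak{g}} \mathcal{A} \to \mathcal{B}$, and (2) winning strategies for Duplicator in the $\mathfrak{g}$-guarded $k$-bounded simulation game from $\mathcal{A}$ to $\mathcal{B}$. Thus $\mathcal{A} \preceq^{\mathfrak{g}}_{k} \mathcal{B}$ iff there is a homomorphism $\mathbb{G}_{k}^{\mathfrak{g}} \mathcal{A} \to \mathcal{B}$.
   Context: A set is $k$-guarded (atom/loose) if contained in the support of a tuple of length at most $k$ satisfying an atom/loose guard. $\mathbb{G}_k^{\mathfrak{g}}\mathcal{A}$ is the $\sigma$-structure whose universe consists of equivalence classes $[p,a]$ of focussed plays $\langle p,a\rangle$, where $p=[U_1,\ldots,U_n]$ is a non-empty list of $k$-guarded $\mathfrak{g}$-guarded sets of $\mathcal{A}$ and $a\in U_n$; $\langle p,a\rangle\sim\langle q,a'\rangle$ iff $a=a'$, the greatest common prefix $p\sqcap q$ is non-empty, and $a$ lies in the last element of every play on the prefix-order paths from $p\sqcap q$ to $p$ and to $q$; $R^{\mathbb{G}_k\mathcal{A}} = \{([p,a_1],\ldots,[p,a_r]) \mid R^{\mathcal{A}}(a_1,\ldots,a_r)\}$. The $k$-bounded $\mathfrak{g}$-guarded simulation game from $\mathcal{A}$ to $\mathcal{B}$: starting with $X_0=\varnothing,\varphi_0=\varnothing$, in each round Spoiler picks a $k$-guarded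 set $X_{n+1}$ in $\mathcal{A}$ and Duplicator responds with a $k$-guarded set $Y_{n+1}$ in $\mathcal{B}$ and a partial homomorphism $\varphi_{n+1}:X_{n+1}\to Y_{n+1}$ agreeing with $\varphi_n$ on $X_{n+1}\cap X_n$; Duplicator wins if he can always respond. $\mathcal{A}\preceq^{\mathfrak{g}}_k\mathcal{B}$ means Duplicator has a winning strategy. *)

(* Defs.v *)
From mathcomp Require Import all_boot.
From Stdlib Require Import ClassicalEpsilon.

Set Implicit Arguments.
Unset Strict Implicit.
Unset Printing Implicit Defensive.

Section Defs.

Variables (Sym : Type) (ar : Sym -> nat).

Record structure := Structure {
  carrier :> Type;
  rel : forall R : Sym, ('I_(ar R) -> carrier) -> Prop }.
Arguments rel s R _ : clear implicits.
Arguments rel {s} R _.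

Definition is_hom (S T : structure) (h : S -> T) : Prop :=
  forall (R : Sym) (t : 'I_(ar R) -> S), rel R t -> rel R (fun i => h (t i)).

Definition hom (S T : structure) : Type := {h : S -> T | is_hom h}.

Inductive guard := AtomGuard | LooseGuard.

Definition supp (A : Type) (n : nat) (t : 'I_n -> A) : A -> Prop :=
  fun x => exists i, t i = x.

(* A tuple t satisfies an atom guard alpha(x_1..x_n) (an atomic formula,
   possibly an equality, in which exactly the variables x_1..x_n occur):
   either it is an equality atom (support a singleton), or a relational atom
   R(y_1..y_m) with {y_j} = {x_i}. *)
Definition atom_guarded (A : structure) (n : nat) (t : 'I_n -> A) : Prop :=
  (exists a : A, forall x, supp t x <-> x = a) \/
  (exists (R : Sym) (b : 'I_(ar R) -> A),
      rel R b /\ forall x, supp b x <-> supp t x).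

(* A tuple t satisfies a loose guard: a conjunction of atoms over the variables
   x_1..x_n in which every pair of variables co-occurs in some conjunct
   (equality atoms allowed). *)
Definition loose_guarded (A : structure) (n : nat) (t : 'I_n -> A) : Prop :=
  forall i j : 'I_n, t i = t j \/
    exists (R : Sym) (b : 'I_(ar R) -> A),
      [/\ rel R b, (forall x, supp b x -> supp t x), supp b (t i) & supp b (t j)].

Definition guarded_tuple (g : guard) (A : structure) (n : nat) (t : 'I_n -> A) :=
  match g with
  | AtomGuard => atom_guarded t
  | LooseGuard => loose_guarded t
  end.

Definition kguarded (g : guard) (k : nat) (A : structure) (X : A -> Prop) : Prop :=
  exists (n : nat) (t : 'I_n -> A),
    n <= k /\ guarded_tuple g t /\ forall x, X x -> supp t x.

Definition lastS (A : Type) (p : seq (A -> Prop)) : A -> Prop :=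
  last (fun _ => False) p.

Definition isplay (g : guard) (k : nat) (A : structure) (p : seq (A -> Prop)) : Prop :=
  p <> [::] /\ List.Forall (@kguarded g k A) p.

Fixpoint gcp (T : Type) (p q : seq T) : seq T :=
  match p, q with
  | x :: p', y :: q' =>
      if excluded_middle_informative (x = y) then x :: gcp p' q' else [::]
  | _, _ => [::]
  end.

Definition on_path (A : Type) (r p : seq (A -> Prop)) (a : A) : Prop :=
  forall i, size r <= i <= size p -> lastS (take i p) a.

Definition sim (A : Type) (pa qa : seq (A -> Prop) * A) : Prop :=
  [/\ pa.2 = qa.2, gcp pa.1 qa.1 <> [::],
      on_path (gcp pa.1 qa.1) pa.1 pa.2 & on_path (gcp pa.1 qa.1) qa.1 qa.2].

Definition fplay (g : guard) (k : nat) (A : structure) : Type :=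
  {pa : seq (A -> Prop) * A | isplay g k pa.1 /\ lastS pa.1 pa.2}.

Definition cls (g : guard) (k : nat) (A : structure) (x : fplay g k A) :
  fplay g k A -> Prop := fun y => sim (sval x) (sval y).

Definition Gcarrier (g : guard) (k : nat) (A : structure) : Type :=
  {C : fplay g k A -> Prop | exists x, C = cls x}.

Definition Grel (g : guard) (k : nat) (A : structure) (R : Sym)
  (c : 'I_(ar R) -> Gcarrier g k A) : Prop :=
  exists (p : seq (A -> Prop)) (a : 'I_(ar R) -> A)
         (H : forall i, isplay g k p /\ lastS p (a i)),
    (forall i, sval (c i) = cls (exist _ (p, a i) (H i) : fplay g k A))
    /\ rel R a.

Definition GG (g : guard) (k : nat) (A : structure) : structure :=
  @Structure (Gcarrier g k A) (@Grel g k A).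

(* Strategies for Duplicator in the k-bounded g-guarded simulation game from
   A to B: to each non-empty sequence of Spoiler moves p = [X_1,...,X_n]
   (a play) Duplicator assigns a map phi_p on X_n (= last p). *)
Definition play (g : guard) (k : nat) (A : structure) : Type :=
  {p : seq (A -> Prop) | isplay g k p}.

Definition strategy (g : guard) (k : nat) (A B : structure) : Type :=
  forall (p : play g k A) (a : A), lastS (sval p) a -> B.

(* A strategy is winning iff it always provides a legal response:
   phi_p is a partial homomorphism X_n -> Y_n for some k-guarded Y_n in B,
   agreeing with phi_{p'} on X_n cap X_{n-1} when p = p' ++ [X_n]. *)
Definition winning (g : guard) (k : nat) (A B : structure) (s : strategy g k A B)
  : Prop :=
  [/\ (forall p : play g k A,
         exists Y : B -> Prop, @kguarded g k B Y /\
           forall a (Ha : lastS (sval p) a), Y (s p a Ha)),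
      (forall (p : play g k A) (R : Sym) (t : 'I_(ar R) -> A)
              (Ht : forall i, lastS (sval p) (t i)),
         rel R t -> rel R (fun i => s p (t i) (Ht i)))
    & (forall (p p' : play g k A) (X : A -> Prop),
         sval p' = rcons (sval p) X ->
         forall a (Ha : lastS (sval p) a) (Ha' : lastS (sval p') a),
           s p' a Ha' = s p a Ha)].

Definition wstrat (g : guard) (k : nat) (A B : structure) : Type :=
  {s : strategy g k A B | winning s}.

Definition simulates (g : guard) (k : nat) (A B : structure) : Prop :=
  inhabited (wstrat g k A B).

End Defs.

(* Main.v *)
Require Import Defs.
From mathcomp Require Import all_boot zify.
From Stdlib Require Import ClassicalEpsilon ProofIrrelevance FunctionalExtensionality PropExtensionality.

Set Implicit Arguments.
Unset Strict Implicit.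
Unset Printing Implicit Defensive.

Section GCP.
Variable T : Type.
Implicit Types p q s : seq T.

Lemma gcp_sym p q : gcp p q = gcp q p.
Proof.
elim: p q => [|x p IH] [|y q] //=.
case: (excluded_middle_informative (x = y)) => e1;
case: (excluded_middle_informative (y = x)) => e2 //.
- by rewrite /= IH; subst x.
- by case: e2.
- by case: e1.
Qed.

Lemma gcp_takel p q : gcp p q = take (size (gcp p q)) p.
Proof.
elim: p q => [|x p IH] [|y q] //=.
case: (excluded_middle_informative (x = y)) => e1 //=.
by rewrite -IH.
Qed.

Lemma gcp_taker p q : gcp p q = take (size (gcp p q)) q.
Proof. rewrite gcp_sym; exact: gcp_takel. Qed.

Lemma gcp_size_l p q : size (gcp p q) <= size p.
Proof.
elim: p q => [|x p IH] [|y q] //=.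
case: (excluded_middle_informative (x = y)) => e1 //=.
exact: IH.
Qed.

Lemma gcp_size_r p q : size (gcp p q) <= size q.
Proof. rewrite gcp_sym; exact: gcp_size_l. Qed.

Lemma gcp_max n p q : n <= size p -> n <= size q -> take n p = take n q ->
  n <= size (gcp p q).
Proof.
elim: n p q => [|n IH] [|x p] [|y q] //= Hp Hq [exy Htk].
case: (excluded_middle_informative (x = y)) => e //=.
exact: IH.
Qed.

Lemma take_gcp i p q : i <= size (gcp p q) -> take i p = take i q.
Proof.
move=> hi.
by rewrite -(take_takel p hi) -gcp_takel gcp_taker take_takel.
Qed.

Lemma gcp_cat p s : gcp p (p ++ s) = p.
Proof.
elim: p => [|x p IH] //=.
case: (excluded_middle_informative (x = x)) => e //=; by rewrite IH.
Qed.

Lemma gcp_self p : gcp p p = p.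
Proof. by rewrite -{2}(cats0 p) gcp_cat. Qed.

End GCP.

Section Sim.
Variable A : Type.

Lemma sim_sym (x y : seq (A -> Prop) * A) : sim x y -> sim y x.
Proof.
case: x y => [p a] [q b] [/= e hne h1 h2]; split => //=; rewrite gcp_sym //.
Qed.

Lemma sim_refl p (a : A) : p <> [::] -> lastS p a -> sim (p, a) (p, a).
Proof.
move=> hne ha; split => //=; rewrite gcp_self //;
move=> i /andP[h1 h2]; have -> : i = size p by apply/eqP; rewrite eqn_leq h1 h2.
by rewrite take_size.
by rewrite take_size.
Qed.

Lemma sim_rcons p Z (a : A) : p <> [::] -> lastS p a -> Z a ->
  sim (p, a) (rcons p Z, a).
Proof.
move=> hne ha hz; split => //=; rewrite -cats1 gcp_cat //.
- move=> i /andP[h1 h2]; have -> : i = size p by apply/eqP; rewrite eqn_leq h1 h2.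
  by rewrite take_size.
- move=> i; rewrite size_cat /= => /andP[h1 h2].
  have : i = size p \/ i = size p + 1 by lia.
  case => ->.
  + by rewrite take_size_cat.
  + by rewrite take_oversize ?size_cat // /lastS cats1 last_rcons.
Qed.

Lemma sim_trans (x y z : seq (A -> Prop) * A) : sim x y -> sim y z -> sim x z.
Proof.
case: x => [p a]; case: y => [q b]; case: z => [s c].
move=> [/= eab hne1 h1 h1'] [/= ebc hne2 h2 h2'].
subst b c; rewrite /on_path in h1 h1' h2 h2'.
have m1p := gcp_size_l p q; have m1q := gcp_size_r p q.
have m2q := gcp_size_l q s; have m2s := gcp_size_r q s.
have m1pos : 0 < size (gcp p q) by case: (gcp p q) hne1.
have m2pos : 0 < size (gcp q s) by case: (gcp q s) hne2.
case: (leqP (size (gcp p q)) (size (gcp q s))) => hle.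
- have e : take (size (gcp p q)) p = take (size (gcp p q)) s.
    by rewrite (take_gcp (q := q)) // (take_gcp (p := q) (q := s)).
  have := gcp_max (ltac:(lia) : size (gcp p q) <= size p) (ltac:(lia) : size (gcp p q) <= size s) e.
  move=> h3; split => //=; rewrite /on_path.
  + by move=> e0; move: h3; rewrite e0 /=; lia.
  + move=> i /andP[hi1 hi2]; apply: h1; lia.
  + move=> i /andP[hi1 hi2].
    case: (leqP (size (gcp q s)) i) => hi3; first by apply: h2'; lia.
    rewrite -(take_gcp (ltnW hi3)); apply: h1'; lia.
- have e : take (size (gcp q s)) p = take (size (gcp q s)) s.
    by rewrite (take_gcp (q := q)) ?(ltnW hle) // (take_gcp (p := q) (q := s)).
  have := gcp_max (ltac:(lia) : size (gcp q s) <= size p) (ltac:(lia) : size (gcp q s) <= size s) e.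
  move=> h3; split => //=; rewrite /on_path.
  + by move=> e0; move: h3; rewrite e0 /=; lia.
  + move=> i /andP[hi1 hi2].
    case: (leqP (size (gcp p q)) i) => hi3; first by apply: h1; lia.
    rewrite (take_gcp (ltnW hi3)); apply: h2; lia.
  + move=> i /andP[hi1 hi2]; apply: h2'; lia.
Qed.

End Sim.

Lemma Forall_take (T : Type) (P : T -> Prop) n p :
  List.Forall P p -> List.Forall P (take n p).
Proof.
elim: p n => [|x p IH] [|n] //= h; try constructor.
by inversion h. by apply: IH; inversion h.
Qed.

Lemma Forall_rcons (T : Type) (P : T -> Prop) p x :
  List.Forall P p -> P x -> List.Forall P (rcons p x).
Proof.
elim: p => [|y p IH] /= h hx; first by constructor.
inversion h; constructor => //; exact: IH.
Qed.

Lemma Forall_last (T : Type) (P : T -> Prop) x p :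
  List.Forall P (x :: p) -> P (last x p).
Proof.
elim: p x => [|y p IH] x h /=; first by inversion h.
apply: IH; by inversion h.
Qed.

Lemma sig_eq (T : Type) (P : T -> Prop) (x y : {a | P a}) : sval x = sval y -> x = y.
Proof.
case: x y => [x hx] [y hy] /= e; subst y; by rewrite (proof_irrelevance _ hx hy).
Qed.

Section Img.
Variables (Sym : Type) (ar : Sym -> nat) (A B : structure ar).
Variables (S : A -> Prop) (f : forall a, S a -> B).
Hypothesis frel : forall R (b : 'I_(ar R) -> A) (Hb : forall j, S (b j)),
  @Defs.rel _ _ _ R b -> @Defs.rel _ _ _ R (fun j => f (Hb j)).

Lemma fcongr a b (Ha : S a) (Hb : S b) : a = b -> f Ha = f Hb.
Proof. move=> e; subst b; by rewrite (proof_irrelevance _ Ha Hb). Qed.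

Variables (n : nat) (t : 'I_n -> A) (H : forall x, supp t x -> S x)
  (Ht : forall i, S (t i)).

Lemma atom_img : atom_guarded t -> atom_guarded (fun i => f (Ht i)).
Proof.
case => [[a0 ha] | [R [b [hb hs]]]].
- left. have ta : S a0 by apply: H; apply (ha a0).2.
  exists (f ta) => y; split.
  + case=> i <-; apply: fcongr; apply (ha (t i)).1; by exists i.
  + move=> ->. have [i ei] := (ha a0).2 erefl. exists i; exact: fcongr.
- right.
  have Hb : forall j, S (b j).
    by move=> j; apply: H; apply (hs (b j)).1; exists j.
  exists R, (fun j => f (Hb j)); split; first exact: frel.
  move=> y; split.
  + case=> j <-. have [i ei] := (hs (b j)).1 (ex_intro _ j erefl).
    exists i; exact: fcongr.
  + case=> i <-. have [j ej] := (hs (t i)).2 (ex_intro _ i erefl).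
    exists j; exact: fcongr.
Qed.

Lemma loose_img : loose_guarded t -> loose_guarded (fun i => f (Ht i)).
Proof.
move=> hl i j; case: (hl i j) => [e | [R [b [hb hsub hi hj]]]].
- left; exact: fcongr.
- right.
  have Hb : forall j, S (b j).
    by move=> j'; apply: H; apply: hsub; exists j'.
  exists R, (fun j => f (Hb j)); split.
  + exact: frel.
  + move=> y [j' <-]. have [i' ei'] := hsub (b j') (ex_intro _ j' erefl).
    exists i'; exact: fcongr.
  + case: hi => j' ej'. exists j'; exact: fcongr.
  + case: hj => j' ej'. exists j'; exact: fcongr.
Qed.

Lemma guard_img g : guarded_tuple g t -> guarded_tuple g (fun i => f (Ht i)).
Proof. case: g; [exact: atom_img | exact: loose_img]. Qed.

End Img.

Lemma nullary_guarded (Sym : Type) (ar : Sym -> nat) (A : structure ar) g R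
  (a : 'I_(ar R) -> A) : ~ (exists i : 'I_(ar R), True) -> @Defs.rel _ _ _ R a -> guarded_tuple g a.
Proof.
move=> no hr; case: g => /=.
- right; exists R, a; split => //.
- move=> i; exfalso; apply: no; by exists i.
Qed.

Section Main.
Variables (Sym : Type) (ar : Sym -> nat) (g : guard) (k : nat) (A B : structure ar).

Local Notation fp := (fplay g k A).
Local Notation GA := (GG g k A).

Definition cl (x : fp) : Gcarrier g k A := exist _ (cls x) (ex_intro _ x erefl).

Lemma cl_congr (x y : fp) : sval x = sval y -> cl x = cl y.
Proof. by move=> e; congr cl; apply: sig_eq. Qed.

Lemma cl_eq (x y : fp) : sim (sval x) (sval y) -> cl x = cl y.
Proof.
move=> h; apply: sig_eq => /=; apply: functional_extensionality => z.
apply: propositional_extensionality; rewrite /cls; split => hz.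
- exact: sim_trans (sim_sym h) hz.
- exact: sim_trans h hz.
Qed.

Lemma isplay_take (p : seq (A -> Prop)) j : isplay g k p -> 0 < j -> isplay g k (take j p).
Proof.
case=> hne hf hj; split; last exact: Forall_take.
by case: p hne hf => // x p _ _; case: j hj.
Qed.

Lemma fp_refl (x : fp) : sim (sval x) (sval x).
Proof. case: x => [[p a] [[hne hf] ha]]; exact: sim_refl. Qed.

Definition sfp (s : strategy g k A B) (x : fp) : B :=
  s (exist _ (sval x).1 (proj1 (svalP x))) (sval x).2 (proj2 (svalP x)).

Lemma s_congr (s : strategy g k A B) (p q : play g k A) a b Ha Hb :
  sval p = sval q -> a = b -> s p a Ha = s q b Hb.
Proof.
case: p Ha => [p hp] Ha; case: q Hb => [q hq] Hb /= e e'; subst q b.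
have eh : hq = hp by apply: proof_irrelevance.
subst hq; by rewrite (proof_irrelevance _ Ha Hb).
Qed.

Lemma down (s : strategy g k A B) (W : winning s) (p : seq (A -> Prop)) a m :
  0 < m -> m <= size p ->
  (forall i, m <= i <= size p -> lastS (take i p) a) ->
  forall d, m + d <= size p -> forall (pj r : play g k A) Hj Hr,
  sval pj = take (m + d) p -> sval r = take m p -> s pj a Hj = s r a Hr.
Proof.
move=> hm hmp hpath; elim => [|d IH] hd pj r Hj Hr ej er.
- by apply: s_congr => //; rewrite ej er addn0.
- have hlt : m + d < size p by rewrite addnS in hd.
  have hpl : isplay g k (take (m + d) p).
    have := isplay_take (svalP pj) (ltac:(lia) : 0 < m + d).
    by rewrite ej take_takel ?addnS.
  have Ha' : lastS (take (m + d) p) a by apply: hpath; lia.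
  case: W => _ _ W3.
  have e : sval pj = rcons (sval (exist _ (take (m + d) p) hpl : play g k A))
                       (nth (fun _ => False) p (m + d)).
    by rewrite ej /= -take_nth // addnS.
  rewrite (W3 _ pj _ e a Ha' Hj).
  exact: (IH (ltnW hlt) (exist _ (take (m + d) p) hpl) r Ha' Hr erefl er).
Qed.

Lemma wd (s : strategy g k A B) (W : winning s) (x y : fp) :
  sim (sval x) (sval y) -> sfp s x = sfp s y.
Proof.
case: x y => [[p a] [hp ha]] [[q b] [hq hb]] [/= eab hne h1 h2].
subst b; rewrite /sfp /=.
have hm : 0 < size (gcp p q) by case: (gcp p q) hne.
have hr : isplay g k (gcp p q) by rewrite gcp_takel; apply: isplay_take.
have hra : lastS (gcp p q) a.
  rewrite {1}gcp_takel; apply: h1; rewrite leqnn gcp_size_l //.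
transitivity (s (exist _ (gcp p q) hr) a hra).
- apply: (down W hm (gcp_size_l p q) h1 (d := size p - size (gcp p q))) => //=.
  + by rewrite subnKC ?gcp_size_l.
  + by rewrite subnKC ?gcp_size_l // take_size.
  + exact: gcp_takel.
- symmetry.
  apply: (down W hm (gcp_size_r p q) h2 (d := size q - size (gcp p q))) => //=.
  + by rewrite subnKC ?gcp_size_r.
  + by rewrite subnKC ?gcp_size_r // take_size.
  + exact: gcp_taker.
Qed.

Definition mkfp (p : play g k A) a (Ha : lastS (sval p) a) : fp :=
  exist _ (sval p, a) (conj (svalP p) Ha).

Definition Fs (h : hom GA B) : strategy g k A B :=
  fun p a Ha => sval h (cl (mkfp Ha)).

Lemma img_rel (h : hom GA B) (q : play g k A) R (b : 'I_(ar R) -> A)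
  (Hb : forall j, lastS (sval q) (b j)) :
  @Defs.rel _ _ _ R b -> @Defs.rel _ _ _ R (fun j => sval h (cl (mkfp (Hb j)))).
Proof.
move=> hb; apply: (svalP h).
exists (sval q), b, (fun j => conj (svalP q) (Hb j)); split => //.
Qed.

Lemma Fwin h : winning (Fs h).
Proof.
split.
- move=> [p hp] /=.
  have [hne hf] := hp.
  have : kguarded g k (lastS p).
    by move: hne hf; clear hp; case: p => // x p _ hf; rewrite /lastS /=; exact: Forall_last.
  case=> n [t [hn [ht hsub]]].
  have hq : isplay g k (rcons p (supp t)).
    split.
    + by move=> e; have := congr1 size e; rewrite size_rcons.
    + apply: Forall_rcons hf _; exists n, t; split => //.
  pose q : play g k A := exist _ (rcons p (supp t)) hq.
  have hqa : forall i, lastS (sval q) (t i).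
    by move=> i; rewrite /= /lastS last_rcons; exists i.
  exists (supp (fun i => sval h (cl (mkfp (hqa i))))); split.
  + exists n, (fun i => sval h (cl (mkfp (hqa i)))); split => //; split => //.
    apply: (@guard_img _ _ A B (lastS (sval q)) (fun a Ha => sval h (cl (mkfp Ha)))).
    * move=> R b Hb hb; exact: img_rel.
    * by move=> x [i <-].
    * exact: ht.
  + move=> a Ha. have [i ei] := hsub a Ha. exists i. rewrite /Fs.
    congr (sval h _); apply: cl_eq => /=; rewrite ei; apply: sim_sym.
    apply: sim_rcons => //; exists i => //.
- move=> p R t Ht hr; exact: img_rel.
- move=> p p' X e a Ha Ha'; rewrite /Fs.
  congr (sval h _); apply: cl_eq => /=; rewrite e; apply: sim_sym.
  apply: sim_rcons => //; first exact: (proj1 (svalP p)).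
  by move: Ha'; rewrite e /lastS last_rcons.
Qed.

Definition Fmap (h : hom GA B) : wstrat g k A B := exist _ (Fs h) (Fwin h).

Definition rep (c : Gcarrier g k A) : fp :=
  proj1_sig (constructive_indefinite_description _ (svalP c)).

Lemma repP c : sval c = cls (rep c).
Proof. exact: (proj2_sig (constructive_indefinite_description _ (svalP c))). Qed.

Definition Gh (s : wstrat g k A B) : GA -> B := fun c => sfp (sval s) (rep c).

Lemma Gh_cl s x : Gh s (cl x) = sfp (sval s) x.
Proof.
rewrite /Gh; apply: wd (svalP s) _ _ _.
have e := repP (cl x).
have := fp_refl (rep (cl x)).
rewrite -[sim _ _]/(cls (rep (cl x)) (rep (cl x))) -e /= /cls => hs.
exact: sim_sym hs.
Qed.

Lemma Gh_hom s : is_hom (Gh s).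
Proof.
move=> R c [p [a [H [hc hr]]]].
have ec : forall i, c i = cl (exist _ (p, a i) (H i)).
  by move=> i; apply: sig_eq; rewrite hc.
have [pp [Ht Heq]] : exists (pp : play g k A) (Ht : forall i, lastS (sval pp) (a i)),
    forall i, Gh s (c i) = sval s pp (a i) (Ht i).
  case: (classic (exists i : 'I_(ar R), True)) => [[i0 _]|no].
  - exists (exist _ p (proj1 (H i0))), (fun i => proj2 (H i)) => i.
    rewrite ec Gh_cl /sfp; exact: s_congr.
  - have hg : kguarded g k (supp a).
      exists (ar R), a; split; last split.
      + case E: (ar R) => [//|n]; exfalso; apply: no.
        have hi : 0 < ar R by rewrite E.
        by exists (Ordinal hi).
      + exact: (nullary_guarded g no hr).
      + done.
    have hpl : isplay g k [:: supp a] by split => //; constructor => //.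
    have Ht : forall i, lastS (sval (exist _ _ hpl : play g k A)) (a i).
      by move=> i; exfalso; apply: no; exists i.
    exists (exist _ _ hpl), Ht => i; exfalso; apply: no; by exists i.
have -> : (fun i => Gh s (c i)) = (fun i => sval s pp (a i) (Ht i)).
  exact: functional_extensionality.
case: (svalP s) => _ W2 _; exact: W2.
Qed.

Definition Gmap (s : wstrat g k A B) : hom GA B := exist _ (Gh s) (@Gh_hom s).

Lemma FG : cancel Fmap Gmap.
Proof.
move=> h; apply: sig_eq => /=; apply: functional_extensionality => c.
rewrite /Gh /sfp /= /Fs.
congr (sval h _); transitivity (cl (rep c)).
- apply: cl_congr => /=; by case: (sval (rep c)).
- by apply: sig_eq; rewrite /= -repP.
Qed.

Lemma GF : cancel Gmap Fmap.
Proof.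
move=> s; apply: sig_eq => /=.
apply: functional_extensionality_dep => p; apply: functional_extensionality_dep => a.
apply: functional_extensionality_dep => Ha.
rewrite /Fs /= Gh_cl /sfp; exact: s_congr.
Qed.

End Main.

Theorem theorem3p8 (Sym : Type) (ar : Sym -> nat) (g : guard) (k : nat)
  (A B : structure ar) :
  0 < k ->
  (exists f : hom (GG g k A) B -> wstrat g k A B, bijective f) /\
  (simulates g k A B <-> inhabited (hom (GG g k A) B)).
Proof.
move=> _; split.
- exists (@Fmap Sym ar g k A B); exact: Bijective (@FG _ _ g k A B) (@GF _ _ g k A B).
- split; case=> x; constructor; [exact: Gmap x | exact: Fmap x].
Qed.
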